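(* Let $T$, $S$, $A$ be closed Hermitian subspaces in $X^2$ with $D(T)=D(S)=:D\subset D(A)$ and $T=S+A$, and assume $\rho(T)\cap\rho(S)\neq\emptyset$. (i) If $A_s$ restricted to $D$ is a finite rank operator, then $T$ is a finite rank perturbation of $S$. (ii) If $T$ is a finite rank perturbation of $S$ and $T(0)^\perp$ reduces both $S$ and $A$, then $A_s$ restricted to $D$ is a finite rank operator.
   Context: $X$ is a complex Hilbert space and $X^2=X\times X$ carries the inner product $\langle (x,f),(y,g)\rangle=\langle x,y\rangle+\langle f,g\rangle$. A subspace $T$ in $X^2$ means a linear subspace of $X^2$ (a linear relation); a linear operator in $X$ is identified with its graph. Notation: $D(T)=\{x:(x,f)\in T \text{ for some } f\}$, $T(x)=\{f:(x,f)\in T\}$, $T^{-1}=\{(f,x):(x,f)\in T\}$, $\lambda I$ is the graph of $x\mapsto \lambda x$. The adjoint is $T^*=\{(y,g)\in X^2:\langle g,x\rangle=\langle y,f\rangle \text{ for all }(x,f)\in T\}$; $T$ is Hermitian if $T\subset T^*$. For subspaces $S,A$ in $X^2$, $S+A=\{(x,f+g):(x,f)\in S,(x,g)\in A\}$. For a closed subspace $T$, set $T_\infty=\{(0,g)\in X^2:(0,g)\in T\}$ and $T_s=T\ominus T_\infty$ (orthogonal complement of $T_\infty$ in $T$), so $T=T_s\oplus T_\infty$; $T_s$ is the graph of a linear operator (the operator part of $T$) with $D(T_s)=D(T)$ and $R(T_s)\subset T(0)^\perp$. Resolvent set: $\rho(T)=\{\lambda\in\mathbb C:(\lambda I-T)^{-1}$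 is a bounded linear operator defined on all of $X\}$. Reducing subspace: a closed subspace $X_1\subset X$ with orthogonal projection $P$ onto it reduces $T$ if $\{(Px,Pf):(x,f)\in T\}\subset T$. Finite rank perturbation: for closed subspaces $T,S$ in $X^2$ with orthogonal projections $P_T,P_S$ of $X^2$ onto $T$, $S$, $T$ is a finite rank perturbation of $S$ if $P_T-P_S$ has finite-dimensional range. *)

(* Defs.v *)
From Stdlib Require Import Reals List.
Open Scope R_scope.
Set Implicit Arguments.

Record C : Type := mkC { Re : R ; Im : R }.
Definition C0 : C := mkC 0 0.
Definition C1 : C := mkC 1 0.
Definition Cadd (a b : C) : C := mkC (Re a + Re b) (Im a + Im b).
Definition Copp (a : C) : C := mkC (- Re a) (- Im a).
Definition Cmul (a b : C) : C :=
  mkC (Re a * Re b - Im a * Im b) (Re a * Im b + Im a * Re b).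
Definition Cconj (a : C) : C := mkC (Re a) (- Im a).

Record HilbertSpace : Type := {
  car :> Type;
  zero : car;
  add : car -> car -> car;
  opp : car -> car;
  scal : C -> car -> car;
  inner : car -> car -> C;
  add_assoc : forall x y z, add x (add y z) = add (add x y) z;
  add_comm : forall x y, add x y = add y x;
  add_zero : forall x, add x zero = x;
  add_opp : forall x, add x (opp x) = zero;
  scal_one : forall x, scal C1 x = x;
  scal_assoc : forall a b x, scal a (scal b x) = scal (Cmul a b) x;
  scal_distr_vec : forall a x y, scal a (add x y) = add (scal a x) (scal a y);
  scal_distr_sc : forall a b x, scal (Cadd a b) x = add (scal a x) (scal b x);
  inner_add_l : forall x y z, inner (add x y) z = Cadd (inner x z) (inner y z);
  inner_scal_l : forall a x y, inner (scal a x) y = Cmul a (inner x y);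
  inner_conj : forall x y, inner y x = Cconj (inner x y);
  inner_pos : forall x, 0 <= Re (inner x x);
  inner_def : forall x, inner x x = C0 -> x = zero;
  complete : forall u : nat -> car,
    (forall eps, eps > 0 -> exists N, forall n m, (n >= N)%nat -> (m >= N)%nat ->
        sqrt (Re (inner (add (u n) (opp (u m))) (add (u n) (opp (u m))))) < eps) ->
    exists l, forall eps, eps > 0 -> exists N, forall n, (n >= N)%nat ->
        sqrt (Re (inner (add (u n) (opp l)) (add (u n) (opp l)))) < eps
}.

Section Defs.
Context {X : HilbertSpace}.

Definition sub (x y : X) : X := add X x (opp X y).
Definition norm (x : X) : R := sqrt (Re (inner X x x)).

Definition zero2 : X * X := (zero X, zero X).
Definition add2 (p q : X * X) : X * X := (add X (fst p) (fst q), add X (snd p) (snd q)).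
Definition scal2 (a : C) (p : X * X) : X * X := (scal X a (fst p), scal X a (snd p)).
Definition sub2 (p q : X * X) : X * X := (sub (fst p) (fst q), sub (snd p) (snd q)).
Definition inner2 (p q : X * X) : C :=
  Cadd (inner X (fst p) (fst q)) (inner X (snd p) (snd q)).
Definition norm2 (p : X * X) : R := sqrt (Re (inner2 p p)).

Definition is_subspace_X (M : X -> Prop) : Prop :=
  M (zero X) /\ (forall x y, M x -> M y -> M (add X x y)) /\
  (forall a x, M x -> M (scal X a x)).

Definition is_closed_X (M : X -> Prop) : Prop :=
  forall (u : nat -> X) (l : X), (forall n, M (u n)) ->
    (forall eps, eps > 0 -> exists N, forall n, (n >= N)%nat -> norm (sub (u n) l) < eps) ->
    M l.

Definition is_subspace2 (T : X * X -> Prop) : Prop :=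
  T zero2 /\ (forall p q, T p -> T q -> T (add2 p q)) /\
  (forall a p, T p -> T (scal2 a p)).

Definition is_closed2 (T : X * X -> Prop) : Prop :=
  forall (u : nat -> X * X) (l : X * X), (forall n, T (u n)) ->
    (forall eps, eps > 0 -> exists N, forall n, (n >= N)%nat -> norm2 (sub2 (u n) l) < eps) ->
    T l.

Definition closed_subspace2 (T : X * X -> Prop) : Prop :=
  is_subspace2 T /\ is_closed2 T.

Definition dom (T : X * X -> Prop) (x : X) : Prop := exists f, T (x, f).
Definition img_at (T : X * X -> Prop) (x : X) (f : X) : Prop := T (x, f).

Definition adjoint (T : X * X -> Prop) : X * X -> Prop :=
  fun q => forall p, T p -> inner X (snd q) (fst p) = inner X (fst q) (snd p).

Definition hermitian (T : X * X -> Prop) : Prop := forall p, T p -> adjoint T p.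

Definition rel_sum (S A : X * X -> Prop) : X * X -> Prop :=
  fun p => exists f g, S (fst p, f) /\ A (fst p, g) /\ snd p = add X f g.

(* (lambda I - T)^{-1} = {(lambda x - f, x) : (x,f) in T} *)
Definition resolvent_rel (T : X * X -> Prop) (lam : C) : X * X -> Prop :=
  fun p => exists f, T (snd p, f) /\ fst p = sub (scal X lam (snd p)) f.

Definition bounded_everywhere_op (Rl : X * X -> Prop) : Prop :=
  (forall y, exists x, Rl (y, x)) /\
  (forall y x1 x2, Rl (y, x1) -> Rl (y, x2) -> x1 = x2) /\
  (exists M, forall y x, Rl (y, x) -> norm x <= M * norm y).

Definition in_resolvent (T : X * X -> Prop) (lam : C) : Prop :=
  bounded_everywhere_op (resolvent_rel T lam).

(* T_infinity and the operator part T_s = T minus-orthogonal T_infinity *)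
Definition multi_part (T : X * X -> Prop) : X * X -> Prop :=
  fun p => fst p = zero X /\ T p.
Definition op_part (T : X * X -> Prop) : X * X -> Prop :=
  fun p => T p /\ forall q, multi_part T q -> inner2 p q = C0.

Definition restrict (T : X * X -> Prop) (D : X -> Prop) : X * X -> Prop :=
  fun p => T p /\ D (fst p).

Fixpoint in_span (l : list X) (v : X) : Prop :=
  match l with
  | nil => v = zero X
  | u :: l' => exists c w, in_span l' w /\ v = add X (scal X c u) w
  end.
Fixpoint in_span2 (l : list (X * X)) (v : X * X) : Prop :=
  match l with
  | nil => v = zero2
  | u :: l' => exists c w, in_span2 l' w /\ v = add2 (scal2 c u) w
  end.

Definition finite_rank_operator (Rl : X * X -> Prop) : Prop :=
  (forall x f1 f2, Rl (x, f1) -> Rl (x, f2) -> f1 = f2) /\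
  exists l : list X, forall p, Rl p -> in_span l (snd p).

Definition orth_proj_X (M : X -> Prop) (P : X -> X) : Prop :=
  forall x, M (P x) /\ forall y, M y -> inner X (sub x (P x)) y = C0.
Definition orth_proj2 (T : X * X -> Prop) (P : X * X -> X * X) : Prop :=
  forall p, T (P p) /\ forall q, T q -> inner2 (sub2 p (P p)) q = C0.

Definition finite_rank_perturbation (T S : X * X -> Prop) : Prop :=
  exists PT PS, orth_proj2 T PT /\ orth_proj2 S PS /\
    exists l : list (X * X), forall p, in_span2 l (sub2 (PT p) (PS p)).

Definition orth_compl (M : X -> Prop) : X -> Prop :=
  fun y => forall g, M g -> inner X y g = C0.

Definition reduces (X1 : X -> Prop) (T : X * X -> Prop) : Prop :=
  is_subspace_X X1 /\ is_closed_X X1 /\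
  exists P, orth_proj_X X1 P /\
    forall x f, T (x, f) -> T (P x, P f).

End Defs.

(* Main.v *)
Require Import Defs.
From Stdlib Require Import Reals List Lra Psatz ClassicalEpsilon Classical.
Import Defs.
Open Scope R_scope.

Lemma Ceq (a b : C) : Re a = Re b -> Im a = Im b -> a = b.
Proof. destruct a, b; simpl; intros; subst; reflexivity. Qed.

Ltac csolve := apply Ceq; simpl; ring.

Section Gen.
Context (H : HilbertSpace).

Local Notation "x +v y" := (add H x y) (at level 50, left associativity).
Local Notation "a *v x" := (scal H a x) (at level 40).
Local Notation "-v x" := (opp H x) (at level 35).
Local Notation "0v" := (zero H).

Lemma add0l (x : H) : 0v +v x = x.
Proof. rewrite add_comm; apply add_zero. Qed.

Lemma addNl (x : H) : (-v x) +v x = 0v.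
Proof. rewrite add_comm; apply add_opp. Qed.

Lemma add_cancel_r (x y z : H) : x +v z = y +v z -> x = y.
Proof.
  intro E. rewrite <- (add_zero H x), <- (add_zero H y), <- (add_opp H z), !add_assoc, E.
  reflexivity.
Qed.

Lemma add_cancel_l (x y z : H) : z +v x = z +v y -> x = y.
Proof. rewrite (add_comm H z x), (add_comm H z y). apply add_cancel_r. Qed.

Lemma scal0 (x : H) : C0 *v x = 0v.
Proof.
  assert (E : C0 *v x = (C0 *v x) +v (C0 *v x)).
  { rewrite <- scal_distr_sc. f_equal. csolve. }
  apply (add_cancel_l _ _ (C0 *v x)). rewrite add_zero. symmetry; exact E.
Qed.

Lemma scal_zero (a : C) : a *v 0v = 0v.
Proof.
  assert (E : a *v 0v = (a *v 0v) +v (a *v 0v)).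
  { rewrite <- scal_distr_vec, add_zero. reflexivity. }
  apply (add_cancel_l _ _ (a *v 0v)). rewrite add_zero. symmetry; exact E.
Qed.

Lemma opp_uniq (x y : H) : x +v y = 0v -> y = -v x.
Proof. intro E. apply (add_cancel_l _ _ x). rewrite E, add_opp. reflexivity. Qed.

Lemma oppE (x : H) : -v x = (Copp C1) *v x.
Proof.
  symmetry; apply opp_uniq.
  rewrite <- (scal_one H x) at 1. rewrite <- scal_distr_sc.
  replace (Cadd C1 (Copp C1)) with C0 by csolve. apply scal0.
Qed.

Lemma opp_opp (x : H) : -v (-v x) = x.
Proof. symmetry; apply opp_uniq. apply addNl. Qed.

Lemma opp_zero : -v 0v = 0v.
Proof. symmetry; apply opp_uniq. apply add_zero. Qed.

Lemma opp_add (x y : H) : -v (x +v y) = (-v x) +v (-v y).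
Proof.
  symmetry; apply opp_uniq.
  rewrite (add_comm H (-v x) (-v y)), add_assoc, <- (add_assoc H x y (-v y)), add_opp, add_zero, add_opp.
  reflexivity.
Qed.

Lemma scal_opp (a : C) (x : H) : a *v (-v x) = (Copp a) *v x.
Proof. rewrite oppE, scal_assoc. f_equal. csolve. Qed.

Lemma opp_scal (a : C) (x : H) : -v (a *v x) = (Copp a) *v x.
Proof. rewrite oppE, scal_assoc. f_equal. csolve. Qed.

Lemma sub_eq0 (x y : H) : x +v (-v y) = 0v -> x = y.
Proof. intro E. apply (add_cancel_r _ _ (-v y)). rewrite E, add_opp. reflexivity. Qed.

Lemma inner_add_r (x y z : H) : inner H x (y +v z) = Cadd (inner H x y) (inner H x z).
Proof.
  rewrite inner_conj, inner_add_l, (inner_conj H y x), (inner_conj H z x). csolve.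
Qed.

Lemma inner_scal_r (a : C) (x y : H) : inner H x (a *v y) = Cmul (Cconj a) (inner H x y).
Proof. rewrite inner_conj, inner_scal_l, (inner_conj H y x). csolve. Qed.

Lemma inner0l (y : H) : inner H 0v y = C0.
Proof. rewrite <- (scal0 0v), inner_scal_l. csolve. Qed.

Lemma inner0r (y : H) : inner H y 0v = C0.
Proof. rewrite inner_conj, inner0l. csolve. Qed.

Lemma inner_opp_l (x y : H) : inner H (-v x) y = Copp (inner H x y).
Proof. rewrite oppE, inner_scal_l. csolve. Qed.

Lemma inner_opp_r (x y : H) : inner H x (-v y) = Copp (inner H x y).
Proof. rewrite oppE, inner_scal_r. csolve. Qed.

Lemma inner_xx_im (x : H) : Im (inner H x x) = 0.
Proof. pose proof (f_equal Im (inner_conj H x x)) as E. simpl in E. lra. Qed.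

Definition nsq (x : H) : R := Re (inner H x x).

Lemma nsq_ge0 (x : H) : 0 <= nsq x.
Proof. apply inner_pos. Qed.

Lemma nsq0 (x : H) : nsq x = 0 -> x = 0v.
Proof. intro E. apply inner_def. apply Ceq; [exact E| apply inner_xx_im]. Qed.

Lemma inner_self0 (x : H) : inner H x x = C0 -> x = 0v.
Proof. apply inner_def. Qed.

Lemma nsq_add (x y : H) : nsq (x +v y) = nsq x + nsq y + 2 * Re (inner H x y).
Proof.
  unfold nsq. rewrite inner_add_l, !inner_add_r, (inner_conj H y x). simpl. ring.
Qed.

Lemma nsq_scalR (t : R) (x : H) : nsq (mkC t 0 *v x) = t * t * nsq x.
Proof.
  unfold nsq. rewrite inner_scal_l, inner_scal_r. simpl. rewrite inner_xx_im. ring.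
Qed.

Lemma nsq_opp (x : H) : nsq (-v x) = nsq x.
Proof. unfold nsq. rewrite inner_opp_l, inner_opp_r. simpl. ring. Qed.

Lemma nsq_as_norm (x : H) : norm x = sqrt (nsq x).
Proof. reflexivity. Qed.

Lemma quad_disc (a b c : R) : 0 <= c -> (forall t, 0 <= a + 2 * t * b + t * t * c) -> b * b <= a * c.
Proof.
  intros Hc Hq.
  destruct (Req_dec c 0) as [Hc0|Hc0].
  - subst c. destruct (Req_dec b 0) as [Hb|Hb].
    + subst b. pose proof (Hq 0). nra.
    + pose proof (Hq (- (a + 1) / (2 * b))) as Q.
      assert (E : a + 2 * (- (a + 1) / (2 * b)) * b + - (a + 1) / (2 * b) * (- (a + 1) / (2 * b)) * 0 = -1)
        by (field; auto). lra.
  - assert (Hcp : 0 < c) by lra.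
    pose proof (Hq (- b / c)) as Q.
    assert (E : a + 2 * (- b / c) * b + - b / c * (- b / c) * c = a - b * b / c) by (field; lra).
    rewrite E in Q.
    assert (0 <= a * c - b * b).
    { replace (a * c - b * b) with ((a - b * b / c) * c) by (field; lra). apply Rmult_le_pos; lra. }
    lra.
Qed.

Lemma cs_re (x y : H) : Re (inner H x y) <= sqrt (nsq x) * sqrt (nsq y).
Proof.
  set (b := Re (inner H x y)).
  assert (D : b * b <= nsq x * nsq y).
  { apply quad_disc. apply nsq_ge0. intro t.
    pose proof (nsq_ge0 (x +v (mkC t 0 *v y))) as P.
    rewrite nsq_add, nsq_scalR, inner_scal_r in P. simpl in P.
    unfold b. nra. }
  rewrite <- sqrt_mult by apply nsq_ge0.
  destruct (Rle_or_lt b 0). { pose proof (sqrt_pos (nsq x * nsq y)). lra. }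
  rewrite <- (sqrt_square b) by lra. apply sqrt_le_1_alt. lra.
Qed.

Lemma triangle (x y : H) : norm (x +v y) <= norm x + norm y.
Proof.
  rewrite !nsq_as_norm.
  pose proof (cs_re x y). pose proof (nsq_ge0 x). pose proof (nsq_ge0 y).
  pose proof (sqrt_pos (nsq x)). pose proof (sqrt_pos (nsq y)).
  rewrite <- (sqrt_square (sqrt (nsq x) + sqrt (nsq y))) by lra.
  apply sqrt_le_1_alt. rewrite nsq_add.
  replace ((sqrt (nsq x) + sqrt (nsq y)) * (sqrt (nsq x) + sqrt (nsq y)))
    with (sqrt (nsq x) * sqrt (nsq x) + sqrt (nsq y) * sqrt (nsq y) + 2 * (sqrt (nsq x) * sqrt (nsq y))) by ring.
  rewrite !sqrt_sqrt by assumption. lra.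
Qed.

End Gen.

Section Gen2.
Context (H : HilbertSpace).

Local Notation "x +v y" := (add H x y) (at level 50, left associativity).
Local Notation "a *v x" := (scal H a x) (at level 40).
Local Notation "-v x" := (opp H x) (at level 35).
Local Notation "0v" := (zero H).

Lemma add_ACA (a b c d : H) : (a +v b) +v (c +v d) = (a +v c) +v (b +v d).
Proof.
  rewrite <- !add_assoc. f_equal. rewrite !add_assoc. f_equal. apply add_comm.
Qed.

Lemma I1 (p q1 q2 : H) : (p +v -v q1) +v -v (p +v -v q2) = q2 +v -v q1.
Proof.
  rewrite opp_add, opp_opp, add_ACA, add_opp, add0l, add_comm. reflexivity.
Qed.

Lemma scal_two (x : H) : mkC 2 0 *v x = x +v x.
Proof.
  replace (mkC 2 0) with (Cadd C1 C1) by csolve. rewrite scal_distr_sc, scal_one. reflexivity.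
Qed.

Lemma I2 (p q1 q2 : H) :
  (p +v -v q1) +v (p +v -v q2) = mkC 2 0 *v (p +v -v (mkC (/2) 0 *v (q1 +v q2))).
Proof.
  rewrite scal_distr_vec, scal_two, scal_opp, scal_assoc.
  replace (Cmul (Copp (mkC 2 0)) (mkC (/ 2) 0)) with (Copp C1) by (apply Ceq; simpl; field).
  rewrite <- oppE, opp_add, add_ACA. reflexivity.
Qed.

Lemma I3 (p a q : H) : (p +v -v a) +v (a +v -v q) = p +v -v q.
Proof.
  rewrite <- add_assoc, (add_assoc H (-v a)), addNl, add0l. reflexivity.
Qed.

Lemma I4 (p q r : H) (t : R) :
  p +v -v (q +v (mkC (- t) 0 *v r)) = (p +v -v q) +v (mkC t 0 *v r).
Proof.
  rewrite opp_add, opp_scal, add_assoc. f_equal. f_equal. apply Ceq; simpl; ring.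
Qed.

Lemma parallelogram (a b : H) : nsq H (a +v b) + nsq H (a +v -v b) = 2 * nsq H a + 2 * nsq H b.
Proof.
  rewrite !nsq_add, nsq_opp, inner_opp_r. simpl. ring.
Qed.

Lemma var_lemma (e r : H) :
  (forall t : R, nsq H e <= nsq H (e +v (mkC t 0 *v r))) -> Re (inner H e r) = 0.
Proof.
  intro Hv.
  assert (D : Re (inner H e r) * Re (inner H e r) <= 0 * nsq H r).
  { apply quad_disc. apply nsq_ge0. intro t. pose proof (Hv t) as V.
    rewrite nsq_add, nsq_scalR, inner_scal_r in V. simpl in V. nra. }
  nra.
Qed.

Lemma sqrt_lt_sq (x eps : R) : 0 <= x -> 0 < eps -> x < eps * eps -> sqrt x < eps.
Proof.
  intros. rewrite <- (sqrt_square eps) by lra. apply sqrt_lt_1_alt. lra.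
Qed.

Lemma le_sqrt_sq (d x : R) : 0 <= d -> d <= sqrt x -> 0 <= x -> d * d <= x.
Proof. intros. rewrite <- (sqrt_sqrt x) by assumption. apply Rmult_le_compat; lra. Qed.

Theorem proj_exists (M : H -> Prop) : is_subspace_X (X:=H) M -> is_closed_X (X:=H) M ->
  forall p : H, exists q, M q /\ forall r, M r -> inner H (sub p q) r = C0.
Proof.
  intros [M0 [Madd Mscal]] Mcl p.
  set (E := fun r => exists q, M q /\ r = - norm (sub p q)).
  assert (Eb : bound E).
  { exists 0. intros r [q [_ ->]]. pose proof (sqrt_pos (nsq H (sub p q))). unfold norm, nsq in *. lra. }
  assert (Ene : exists r, E r) by (exists (- norm (sub p 0v)); exists 0v; auto).
  destruct (completeness E Eb Ene) as [m [Hub Hlub]].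
  set (d := - m).
  assert (Dlow : forall q, M q -> d <= norm (sub p q)).
  { intros q Hq. assert (E (- norm (sub p q))) by (exists q; auto). apply Hub in H0. unfold d. lra. }
  assert (d0 : 0 <= d).
  { pose proof (Dlow 0v M0). unfold d. apply Ropp_le_cancel. rewrite Ropp_involutive, Ropp_0.
    apply Hlub. intros r [q [_ ->]]. pose proof (sqrt_pos (nsq H (sub p q))). unfold norm, nsq in *. lra. }
  assert (Dapp : forall eps, 0 < eps -> exists q, M q /\ norm (sub p q) < d + eps).
  { intros eps Heps. apply NNPP. intro Hn.
    assert (m <= m - eps).
    { apply Hlub. intros r [q [Hq ->]].
      destruct (Rlt_or_le (norm (sub p q)) (d + eps)) as [Hl|Hl].
      - exfalso; apply Hn; exists q; auto.
      - unfold d in Hl. lra. }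
    lra. }
  assert (Hseq : forall n : nat, exists q, M q /\ norm (sub p q) < d + / (INR n + 1)).
  { intro n. apply Dapp. apply Rinv_0_lt_compat. pose proof (pos_INR n). lra. }
  set (u := fun n => proj1_sig (constructive_indefinite_description _ (Hseq n))).
  assert (Hu : forall n, M (u n) /\ norm (sub p (u n)) < d + / (INR n + 1)).
  { intro n. unfold u. destruct (constructive_indefinite_description _ (Hseq n)). simpl. auto. }
  assert (Mid : forall q1 q2, M q1 -> M q2 ->
             nsq H (sub q1 q2) <= 2 * nsq H (sub p q1) + 2 * nsq H (sub p q2) - 4 * (d * d)).
  { intros q1 q2 H1 H2.
    pose proof (parallelogram (sub p q1) (sub p q2)) as Pg. unfold sub in *.
    rewrite I1, I2, nsq_scalR in Pg.
    assert (Mm : M (mkC (/ 2) 0 *v (q1 +v q2))).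
    { apply Mscal. apply Madd; auto. }
    pose proof (Dlow _ Mm) as Dm. unfold sub, norm in Dm. fold (nsq H (p +v -v (mkC (/ 2) 0 *v (q1 +v q2)))) in Dm.
    assert (d * d <= nsq H (p +v -v (mkC (/ 2) 0 *v (q1 +v q2)))).
    { apply le_sqrt_sq; auto. apply nsq_ge0. }
    assert (Esym : nsq H (q2 +v -v q1) = nsq H (q1 +v -v q2)).
    { rewrite <- nsq_opp, opp_add, opp_opp, add_comm. reflexivity. }
    rewrite Esym in Pg. nra. }
  assert (Nsq : forall n, nsq H (sub p (u n)) <= (d + / (INR n + 1)) * (d + / (INR n + 1))).
  { intro n. destruct (Hu n) as [_ Hn]. unfold norm in Hn. fold (nsq H (sub p (u n))) in Hn.
    pose proof (nsq_ge0 H (sub p (u n))). pose proof (sqrt_pos (nsq H (sub p (u n)))).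
    rewrite <- (sqrt_sqrt (nsq H (sub p (u n)))) by assumption. apply Rmult_le_compat; lra. }
  assert (Einv : forall n, 0 < / (INR n + 1) <= 1).
  { intro n. pose proof (pos_INR n). split. apply Rinv_0_lt_compat; lra.
    rewrite <- Rinv_1. apply Rinv_le_contravar; lra. }
  assert (Cau : forall n m, nsq H (sub (u n) (u m)) <= (4 * d + 2) * (/ (INR n + 1) + / (INR m + 1))).
  { intros n m0. pose proof (Mid (u n) (u m0) (proj1 (Hu n)) (proj1 (Hu m0))).
    pose proof (Nsq n). pose proof (Nsq m0). pose proof (Einv n). pose proof (Einv m0). nra. }
  assert (Cauchy : forall eps, eps > 0 -> exists N, forall n m, (n >= N)%nat -> (m >= N)%nat ->
        sqrt (Re (inner H (add H (u n) (opp H (u m))) (add H (u n) (opp H (u m))))) < eps).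
  { intros eps Heps.
    destruct (archimed_cor1 (eps * eps / (2 * (4 * d + 2)))) as [N [HN HN0]].
    { apply Rdiv_lt_0_compat; nra. }
    exists N. intros n m0 Hn Hm. apply sqrt_lt_sq; try lra. apply nsq_ge0.
    pose proof (Cau n m0) as C1. unfold sub in C1.
    assert (Hle : forall k, (k >= N)%nat -> / (INR k + 1) <= / INR N).
    { intros k Hk. apply Rinv_le_contravar. apply lt_0_INR; lia. apply le_INR in Hk. lra. }
    pose proof (Hle n Hn). pose proof (Hle m0 Hm).
    assert (Hd : 0 < 4 * d + 2) by lra.
    assert (HN' : 2 * (4 * d + 2) * / INR N < eps * eps).
    { apply (Rmult_lt_compat_l (2 * (4 * d + 2))) in HN; [|lra].
      replace (2 * (4 * d + 2) * (eps * eps / (2 * (4 * d + 2)))) with (eps * eps) in HN by (field; lra). lra. }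
    unfold nsq in C1. nra. }
  destruct (complete H u Cauchy) as [q Hq].
  assert (Mq : M q) by (apply (Mcl u q); [intro n; apply Hu | exact Hq]).
  exists q. split; [exact Mq|].
  assert (Nq : norm (sub p q) <= d).
  { apply Rnot_lt_le. intro Hlt. set (eps := norm (sub p q) - d).
    destruct (Hq (eps / 2)) as [N1 HN1]; [unfold eps; lra|].
    destruct (archimed_cor1 (eps / 2)) as [N2 [HN2 HN20]]; [unfold eps; lra|].
    set (n := Nat.max N1 N2).
    pose proof (HN1 n (Nat.le_max_l _ _)) as A1.
    destruct (Hu n) as [_ A2].
    assert (/ (INR n + 1) <= / INR N2).
    { apply Rinv_le_contravar. apply lt_0_INR; lia. pose proof (le_INR _ _ (Nat.le_max_r N1 N2)). fold n in H0. lra. }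
    pose proof (triangle H (sub p (u n)) (sub (u n) q)) as Tr. unfold sub in Tr. rewrite I3 in Tr.
    unfold sub, norm in *. unfold eps in *. lra. }
  assert (Nq2 : nsq H (sub p q) <= d * d).
  { pose proof (nsq_ge0 H (sub p q)). unfold norm in Nq. fold (nsq H (sub p q)) in Nq.
    rewrite <- (sqrt_sqrt (nsq H (sub p q))) by assumption. pose proof (sqrt_pos (nsq H (sub p q))).
    apply Rmult_le_compat; lra. }
  assert (Var : forall r, M r -> Re (inner H (sub p q) r) = 0).
  { intros r Mr. apply var_lemma. intro t.
    assert (Mr' : M (q +v (mkC (- t) 0 *v r))) by (apply Madd; auto).
    pose proof (Dlow _ Mr') as D1. unfold sub, norm in D1. rewrite I4 in D1.
    fold (nsq H ((p +v -v q) +v (mkC t 0 *v r))) in D1.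
    apply le_sqrt_sq in D1; [| lra | apply nsq_ge0]. unfold sub in *. lra. }
  intros r Mr. apply Ceq.
  - apply Var; auto.
  - pose proof (Var (mkC 0 1 *v r) (Mscal _ _ Mr)) as V2.
    rewrite inner_scal_r in V2. simpl in V2. simpl. lra.
Qed.

End Gen2.

Section Prod.
Context (X : HilbertSpace).

Definition opp2 (p : X * X) : X * X := (opp X (fst p), opp X (snd p)).

Lemma pr_add_assoc (x y z : X * X) : add2 x (add2 y z) = add2 (add2 x y) z.
Proof. unfold add2; simpl. rewrite !add_assoc. reflexivity. Qed.
Lemma pr_add_comm (x y : X * X) : add2 x y = add2 y x.
Proof. unfold add2; rewrite (add_comm X (fst x)), (add_comm X (snd x)). reflexivity. Qed.
Lemma pr_add_zero (x : X * X) : add2 x zero2 = x.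
Proof. destruct x; unfold add2, zero2; simpl; rewrite !add_zero. reflexivity. Qed.
Lemma pr_add_opp (x : X * X) : add2 x (opp2 x) = zero2.
Proof. unfold add2, opp2, zero2; simpl; rewrite !add_opp. reflexivity. Qed.
Lemma pr_scal_one (x : X * X) : scal2 C1 x = x.
Proof. destruct x; unfold scal2; simpl; rewrite !scal_one. reflexivity. Qed.
Lemma pr_scal_assoc a b (x : X * X) : scal2 a (scal2 b x) = scal2 (Cmul a b) x.
Proof. unfold scal2; simpl; rewrite !scal_assoc. reflexivity. Qed.
Lemma pr_scal_distr_vec a (x y : X * X) : scal2 a (add2 x y) = add2 (scal2 a x) (scal2 a y).
Proof. unfold scal2, add2; simpl; rewrite !scal_distr_vec. reflexivity. Qed.
Lemma pr_scal_distr_sc a b (x : X * X) : scal2 (Cadd a b) x = add2 (scal2 a x) (scal2 b x).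
Proof. unfold scal2, add2; simpl; rewrite !scal_distr_sc. reflexivity. Qed.
Lemma pr_inner_add_l (x y z : X * X) : inner2 (add2 x y) z = Cadd (inner2 x z) (inner2 y z).
Proof. unfold inner2, add2; simpl; rewrite !inner_add_l. csolve. Qed.
Lemma pr_inner_scal_l a (x y : X * X) : inner2 (scal2 a x) y = Cmul a (inner2 x y).
Proof. unfold inner2, scal2; simpl; rewrite !inner_scal_l. csolve. Qed.
Lemma pr_inner_conj (x y : X * X) : inner2 y x = Cconj (inner2 x y).
Proof. unfold inner2; rewrite (inner_conj X (fst y)), (inner_conj X (snd y)). csolve. Qed.
Lemma pr_inner_pos (x : X * X) : 0 <= Re (inner2 x x).
Proof. unfold inner2; simpl. pose proof (inner_pos X (fst x)). pose proof (inner_pos X (snd x)). lra. Qed.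
Lemma pr_inner_def (x : X * X) : inner2 x x = C0 -> x = zero2.
Proof.
  intro E. pose proof (f_equal Re E) as E1. unfold inner2 in E1; simpl in E1.
  pose proof (inner_pos X (fst x)). pose proof (inner_pos X (snd x)).
  destruct x as [a b]. unfold zero2. simpl in *. f_equal; apply nsq0; unfold nsq; lra.
Qed.

Lemma sqrt_add_le (a b : R) : 0 <= a -> 0 <= b -> sqrt (a + b) <= sqrt a + sqrt b.
Proof.
  intros. pose proof (sqrt_pos a). pose proof (sqrt_pos b).
  rewrite <- (sqrt_square (sqrt a + sqrt b)) by lra. apply sqrt_le_1_alt.
  replace ((sqrt a + sqrt b) * (sqrt a + sqrt b)) with (sqrt a * sqrt a + sqrt b * sqrt b + 2 * (sqrt a * sqrt b)) by ring.
  rewrite !sqrt_sqrt by assumption. nra.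
Qed.

Lemma pr_complete : forall u : nat -> X * X,
    (forall eps, eps > 0 -> exists N, forall n m, (n >= N)%nat -> (m >= N)%nat ->
        sqrt (Re (inner2 (add2 (u n) (opp2 (u m))) (add2 (u n) (opp2 (u m))))) < eps) ->
    exists l, forall eps, eps > 0 -> exists N, forall n, (n >= N)%nat ->
        sqrt (Re (inner2 (add2 (u n) (opp2 l)) (add2 (u n) (opp2 l)))) < eps.
Proof.
  intros u Hc.
  assert (Hc1 : forall eps, eps > 0 -> exists N, forall n m, (n >= N)%nat -> (m >= N)%nat ->
        sqrt (Re (inner X (add X (fst (u n)) (opp X (fst (u m)))) (add X (fst (u n)) (opp X (fst (u m)))))) < eps).
  { intros eps He. destruct (Hc eps He) as [N HN]. exists N. intros n m Hn Hm.
    eapply Rle_lt_trans; [|apply (HN n m Hn Hm)]. apply sqrt_le_1_alt. unfold inner2; simpl.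
    pose proof (inner_pos X (add X (snd (u n)) (opp X (snd (u m))))). lra. }
  assert (Hc2 : forall eps, eps > 0 -> exists N, forall n m, (n >= N)%nat -> (m >= N)%nat ->
        sqrt (Re (inner X (add X (snd (u n)) (opp X (snd (u m)))) (add X (snd (u n)) (opp X (snd (u m)))))) < eps).
  { intros eps He. destruct (Hc eps He) as [N HN]. exists N. intros n m Hn Hm.
    eapply Rle_lt_trans; [|apply (HN n m Hn Hm)]. apply sqrt_le_1_alt. unfold inner2; simpl.
    pose proof (inner_pos X (add X (fst (u n)) (opp X (fst (u m))))). lra. }
  destruct (complete X (fun n => fst (u n)) Hc1) as [l1 Hl1].
  destruct (complete X (fun n => snd (u n)) Hc2) as [l2 Hl2].
  exists (l1, l2). intros eps He.
  destruct (Hl1 (eps / 2)) as [N1 HN1]; [lra|].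
  destruct (Hl2 (eps / 2)) as [N2 HN2]; [lra|].
  exists (Nat.max N1 N2). intros n Hn.
  pose proof (HN1 n ltac:(lia)) as A1. pose proof (HN2 n ltac:(lia)) as A2. simpl in A1, A2.
  unfold inner2; simpl.
  eapply Rle_lt_trans; [apply sqrt_add_le; apply inner_pos|]. lra.
Qed.

Definition prodH : HilbertSpace :=
  {| car := X * X; zero := zero2; add := add2; opp := opp2; scal := scal2; inner := inner2;
     add_assoc := pr_add_assoc; add_comm := pr_add_comm; add_zero := pr_add_zero; add_opp := pr_add_opp;
     scal_one := pr_scal_one; scal_assoc := pr_scal_assoc; scal_distr_vec := pr_scal_distr_vec;
     scal_distr_sc := pr_scal_distr_sc; inner_add_l := pr_inner_add_l; inner_scal_l := pr_inner_scal_l;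
     inner_conj := pr_inner_conj; inner_pos := pr_inner_pos; inner_def := pr_inner_def;
     complete := pr_complete |}.

Lemma span2_eq (l : list (X * X)) (v : X * X) : in_span2 l v <-> in_span (X:=prodH) l v.
Proof.
  revert v; induction l as [|u l IH]; intro v; simpl.
  - tauto.
  - split; intros [c [w [Hw E]]]; exists c, w; split; auto; apply IH; auto.
Qed.

Lemma closed_conv (T : X * X -> Prop) : closed_subspace2 T ->
  is_subspace_X (X:=prodH) T /\ is_closed_X (X:=prodH) T.
Proof. intros [S C]. split; [exact S | exact C]. Qed.

Lemma proj2_exists (T : X * X -> Prop) : closed_subspace2 T ->
  exists P : X * X -> X * X, orth_proj2 T P.
Proof.
  intro HT. destruct (closed_conv T HT) as [S C].
  assert (Hp : forall p, exists q, T q /\ forall r, T r -> inner2 (sub2 p q) r = C0).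
  { intro p. destruct (proj_exists prodH T S C p) as [q Hq]. exists q. exact Hq. }
  exists (fun p => proj1_sig (constructive_indefinite_description _ (Hp p))).
  intro p. destruct (constructive_indefinite_description _ (Hp p)). simpl. exact a.
Qed.

End Prod.

Definition Cinv (c : C) : C :=
  mkC (Re c / (Re c * Re c + Im c * Im c)) (- Im c / (Re c * Re c + Im c * Im c)).

Lemma Cnz (c : C) : c <> C0 -> Re c * Re c + Im c * Im c <> 0.
Proof.
  intros Hc E. apply Hc. apply Ceq; simpl; nra.
Qed.

Section Gen3.
Context (H : HilbertSpace).

Local Notation "x +v y" := (add H x y) (at level 50, left associativity).
Local Notation "a *v x" := (scal H a x) (at level 40).
Local Notation "-v x" := (opp H x) (at level 35).
Local Notation "0v" := (zero H).

Lemma combo (a b k : C) (u w w' : H) :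
  (a *v u +v w) +v k *v (b *v u +v w') = (Cadd a (Cmul k b)) *v u +v (w +v k *v w').
Proof.
  rewrite scal_distr_vec, scal_assoc, add_ACA, scal_distr_sc. reflexivity.
Qed.

Lemma span_zero (L : list H) : in_span L 0v.
Proof.
  induction L as [|u L IH]; simpl. reflexivity.
  exists C0, 0v. split; auto. rewrite scal0, add_zero. reflexivity.
Qed.

Lemma span_add_scal (L : list H) (a b : H) (c : C) :
  in_span L a -> in_span L b -> in_span L (a +v c *v b).
Proof.
  revert a b; induction L as [|u L IH]; simpl; intros a b Ha Hb.
  - subst. rewrite scal_zero, add_zero. reflexivity.
  - destruct Ha as [ca [wa [Hwa ->]]]. destruct Hb as [cb [wb [Hwb ->]]].
    exists (Cadd ca (Cmul c cb)), (wa +v c *v wb). split; [apply IH; auto|]. apply combo.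
Qed.

Lemma span_add (L : list H) (a b : H) : in_span L a -> in_span L b -> in_span L (a +v b).
Proof. intros. rewrite <- (scal_one H b). apply span_add_scal; auto. Qed.

Lemma span_scal (L : list H) (a : H) (c : C) : in_span L a -> in_span L (c *v a).
Proof. intros. rewrite <- (add0l H (c *v a)). apply span_add_scal; auto. apply span_zero. Qed.

Lemma span_app_l (l1 l2 : list H) (a : H) : in_span l1 a -> in_span (l1 ++ l2) a.
Proof.
  revert a; induction l1 as [|u l IH]; simpl; intros a Ha.
  - subst. apply span_zero.
  - destruct Ha as [c [w [Hw ->]]]. exists c, w. auto.
Qed.

Lemma span_app_r (l1 l2 : list H) (a : H) : in_span l2 a -> in_span (l1 ++ l2) a.
Proof.
  revert a; induction l1 as [|u l IH]; simpl; intros a Ha.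
  - exact Ha.
  - exists C0, a. split; auto. rewrite scal0, add0l. reflexivity.
Qed.

Lemma sub_zero_r (z : H) : sub z 0v = z.
Proof. unfold sub. rewrite opp_zero, add_zero. reflexivity. Qed.

Lemma add_scal_m1 (x : H) : x +v (Copp C1) *v x = 0v.
Proof. rewrite <- oppE. apply add_opp. Qed.

Lemma fin_lemma (Phi : H -> H -> Prop) (L : list H) : forall (Z : H -> Prop),
  Z 0v -> (forall z1 z2 c, Z z1 -> Z z2 -> Z (z1 +v c *v z2)) ->
  (forall z1 z2 y1 y2 c, Phi z1 y1 -> Phi z2 y2 -> Phi (z1 +v c *v z2) (y1 +v c *v y2)) ->
  (forall z, Z z -> exists y, Phi z y /\ in_span L y) ->
  exists t, forall z, Z z -> exists w, Z w /\ in_span t w /\ Phi (sub z w) 0v.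
Proof.
  induction L as [|u L IH]; intros Z Z0 Zc Plin Hz.
  - exists nil. intros z Hzz. exists 0v. split; auto. split. simpl; reflexivity.
    destruct (Hz z Hzz) as [y [Py Sy]]. simpl in Sy. subst y. rewrite sub_zero_r. exact Py.
  - destruct (classic (forall z, Z z -> exists y, Phi z y /\ in_span L y)) as [Hall|Hnall].
    + apply IH; auto.
    + apply not_all_ex_not in Hnall. destruct Hnall as [z0 Hz0].
      apply imply_to_and in Hz0. destruct Hz0 as [Zz0 Nz0].
      destruct (Hz z0 Zz0) as [y0 [Py0 Sy0]]. simpl in Sy0.
      destruct Sy0 as [c0 [w0 [Hw0 Ey0]]].
      assert (c0nz : c0 <> C0).
      { intro E. apply Nz0. exists y0. split; auto. subst. rewrite scal0, add0l. exact Hw0. }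
      set (Z' := fun z => Z z /\ exists y, Phi z y /\ in_span L y).
      assert (Z'0 : Z' 0v).
      { split; auto. destruct (Hz 0v Z0) as [y1 [Py1 _]].
        exists 0v. split; [|apply span_zero].
        pose proof (Plin _ _ _ _ (Copp C1) Py1 Py1) as P. rewrite !add_scal_m1 in P. exact P. }
      assert (Z'c : forall z1 z2 c, Z' z1 -> Z' z2 -> Z' (z1 +v c *v z2)).
      { intros z1 z2 c [Z1 [y1 [P1 S1]]] [Z2 [y2 [P2 S2]]]. split; auto.
        exists (y1 +v c *v y2). split; auto. apply span_add_scal; auto. }
      destruct (IH Z' Z'0 Z'c Plin) as [t' Ht'].
      { intros z [_ Hz']. exact Hz'. }
      exists (z0 :: t'). intros z Zz.
      destruct (Hz z Zz) as [y [Py Sy]]. simpl in Sy. destruct Sy as [c [w [Hw Ey]]].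
      set (k := Cmul (Copp c) (Cinv c0)).
      assert (Zz' : Z' (z +v k *v z0)).
      { split; [apply Zc; auto|]. exists (y +v k *v y0). split; [apply Plin; auto|].
        rewrite Ey, Ey0, combo.
        replace (Cadd c (Cmul k c0)) with C0.
        - rewrite scal0, add0l. apply span_add_scal; auto.
        - pose proof (Cnz c0 c0nz). unfold k, Cinv. apply Ceq; simpl; field; auto. }
      destruct (Ht' _ Zz') as [w' [[Zw' _] [Sw' Pw']]].
      exists (w' +v (Copp k) *v z0). split; [apply Zc; auto|]. split.
      * simpl. exists (Copp k), w'. split; auto. apply add_comm.
      * assert (E : sub z (w' +v Copp k *v z0) = sub (z +v k *v z0) w').
        { unfold sub. rewrite opp_add, opp_scal.
          replace (Copp (Copp k)) with k by csolve.
          rewrite add_assoc, <- (add_assoc H z), (add_comm H (-v w')), add_assoc. reflexivity. }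
        rewrite E. exact Pw'.
Qed.

Lemma proj_span (N : H -> Prop) (Pn : H -> H) :
  is_subspace_X (X:=H) N -> (forall u, N (Pn u)) ->
  forall L w, in_span L w ->
    exists w', in_span (map (fun u => sub u (Pn u)) L) w' /\ N (sub w w').
Proof.
  intros [N0 [Nadd Nscal]] HP L. induction L as [|u L IH]; simpl; intros w Hw.
  - subst. exists 0v. split; auto. rewrite sub_zero_r. exact N0.
  - destruct Hw as [c [w0 [Hw0 ->]]]. destruct (IH w0 Hw0) as [w0' [S0 N0']].
    exists (c *v sub u (Pn u) +v w0'). split; [exists c, w0'; auto|].
    assert (E : sub (c *v u +v w0) (c *v sub u (Pn u) +v w0') = c *v Pn u +v sub w0 w0').
    { unfold sub. rewrite scal_distr_vec, !opp_add, scal_opp, !opp_scal.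
      replace (Copp (Copp c)) with c by csolve.
      rewrite add_ACA. f_equal.
      rewrite add_assoc, <- scal_distr_sc. replace (Cadd c (Copp c)) with C0 by csolve.
      rewrite scal0, add0l. reflexivity. }
    rewrite E. apply Nadd; auto.
Qed.

End Gen3.

Section Main.
Context (X : HilbertSpace).
Local Notation PX := (prodH X).

Lemma p_sub_eq0 (x y : X * X) : sub2 x y = zero2 -> x = y.
Proof. exact (sub_eq0 PX x y). Qed.
Lemma p_inner_add_l (x y z : X * X) : inner2 (add2 x y) z = Cadd (inner2 x z) (inner2 y z).
Proof. exact (pr_inner_add_l X x y z). Qed.
Lemma p_inner_scal_l a (x y : X * X) : inner2 (scal2 a x) y = Cmul a (inner2 x y).
Proof. exact (pr_inner_scal_l X a x y). Qed.
Lemma p_inner_def (x : X * X) : inner2 x x = C0 -> x = zero2.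
Proof. exact (pr_inner_def X x). Qed.
Lemma p_sub_as (x y : X * X) : sub2 x y = add2 x (scal2 (Copp C1) y).
Proof. exact (f_equal (add PX x) (oppE PX y)). Qed.
Lemma p_inner_sub_l (x y z : X * X) : inner2 (sub2 x y) z = Cadd (inner2 x z) (Copp (inner2 y z)).
Proof. rewrite p_sub_as, p_inner_add_l, p_inner_scal_l. csolve. Qed.

Lemma sub2_fst (x y : X * X) : fst (sub2 x y) = sub (fst x) (fst y).
Proof. reflexivity. Qed.

Lemma sub_self (x : X) : sub x x = zero X.
Proof. apply add_opp. Qed.

Lemma subsp_sub (T : X * X -> Prop) : is_subspace2 T -> forall x y, T x -> T y -> T (sub2 x y).
Proof. intros [T0 [Ta Ts]] x y Hx Hy. rewrite p_sub_as. apply Ta; auto. Qed.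

Lemma subsp_lin (T : X * X -> Prop) : is_subspace2 T -> forall x y c, T x -> T y -> T (add2 x (scal2 c y)).
Proof. intros [T0 [Ta Ts]] x y c Hx Hy. apply Ta; auto. Qed.

Lemma herm_mult_orth (T : X * X -> Prop) : hermitian T -> forall h y,
  T (zero X, h) -> dom T y -> inner X h y = C0.
Proof.
  intros hT h y Hh [g Hg]. pose proof (hT _ Hh (y, g) Hg) as E. simpl in E. rewrite E. apply inner0l.
Qed.

Lemma resolv_zero (S : X * X -> Prop) (lam : C) : hermitian S -> is_subspace2 S -> in_resolvent S lam ->
  forall h, (forall y, dom S y -> inner X h y = C0) -> S (zero X, h).
Proof.
  intros hS sS [Hsurj _] h Hh.
  destruct (Hsurj h) as [x [f [Sxf Eh]]]. simpl in Sxf, Eh.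
  assert (Key : forall y g, S (y, g) -> Cmul lam (inner X x y) = inner X x g).
  { intros y g Syg. pose proof (Hh y (ex_intro _ g Syg)) as E0.
    rewrite Eh in E0. unfold sub in E0. rewrite inner_add_l, inner_scal_l, inner_opp_l in E0.
    pose proof (hS _ Sxf (y, g) Syg) as E1. simpl in E1. rewrite E1 in E0.
    apply Ceq; [pose proof (f_equal Re E0) | pose proof (f_equal Im E0)]; simpl in *; lra. }
  assert (x0 : x = zero X).
  { destruct (Req_dec (Im lam) 0) as [Hr|Hr].
    - destruct (Hsurj x) as [y [g [Syg Ex]]]. simpl in Syg, Ex.
      apply inner_def. pose proof (Key y g Syg) as K.
      rewrite Ex at 2. unfold sub. rewrite inner_add_r, inner_scal_r, inner_opp_r.
      rewrite <- K. apply Ceq; simpl; rewrite Hr; ring.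
    - pose proof (Key x f Sxf) as K.
      pose proof (hS _ Sxf (x, f) Sxf) as E1. simpl in E1.
      pose proof (inner_conj X x f) as E2. rewrite E1 in E2.
      pose proof (f_equal Im E2) as E3. simpl in E3.
      pose proof (f_equal Im K) as K2. simpl in K2. rewrite inner_xx_im in K2.
      apply nsq0. unfold nsq.
      assert (Im lam * Re (inner X x x) = 0) by lra.
      apply Rmult_integral in H. destruct H; [contradiction|assumption]. }
  subst x. rewrite scal_zero in Eh. unfold sub in Eh. rewrite add0l in Eh.
  destruct sS as [_ [_ Ssc]]. pose proof (Ssc (Copp C1) _ Sxf) as Sm. unfold scal2 in Sm. simpl in Sm.
  rewrite scal_zero, <- oppE in Sm. rewrite Eh. exact Sm.
Qed.

Lemma op_lin (A : X * X -> Prop) : is_subspace2 A -> forall x1 g1 x2 g2 c,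
  op_part A (x1, g1) -> op_part A (x2, g2) -> op_part A (add X x1 (scal X c x2), add X g1 (scal X c g2)).
Proof.
  intros sA x1 g1 x2 g2 c [A1 O1] [A2 O2]. split.
  - exact (subsp_lin A sA _ _ c A1 A2).
  - intros q Hq. change (inner2 (add2 (x1, g1) (scal2 c (x2, g2))) q = C0).
    rewrite p_inner_add_l, p_inner_scal_l, O1, O2 by auto. csolve.
Qed.

Lemma proj_fix (T : X * X -> Prop) (P : X * X -> X * X) : is_subspace2 T -> orth_proj2 T P ->
  forall p, T p -> P p = p.
Proof.
  intros sT oP p Tp. destruct (oP p) as [TP O]. symmetry. apply p_sub_eq0. apply p_inner_def.
  apply O. apply subsp_sub; auto.
Qed.

Lemma proj_inner (T : X * X -> Prop) (P : X * X -> X * X) : orth_proj2 T P ->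
  forall p r, T r -> inner2 (P p) r = inner2 p r.
Proof.
  intros oP p r Tr. destruct (oP p) as [_ O]. pose proof (O r Tr) as E.
  rewrite p_inner_sub_l in E. apply Ceq; [pose proof (f_equal Re E) | pose proof (f_equal Im E)]; simpl in *; lra.
Qed.

End Main.

Section Main2.
Context (X : HilbertSpace).
Local Notation PX := (prodH X).

Lemma multi_closed (A : X * X -> Prop) : closed_subspace2 A -> closed_subspace2 (multi_part A).
Proof.
  intros [[A0 [Aa As]] Ac]. split; [split; [|split]|].
  - split; [reflexivity|exact A0].
  - intros p q [Fp Ap] [Fq Aq]. split; [|apply Aa; auto]. simpl. rewrite Fp, Fq. apply add_zero.
  - intros a p [Fp Ap]. split; [|apply As; auto]. simpl. rewrite Fp. apply scal_zero.
  - intros u l Hu Hc. split; [|apply (Ac u l); [intro n; apply Hu|exact Hc]].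
    apply nsq0. apply NNPP. intro Hn.
    assert (Hp : 0 < nsq X (fst l)) by (pose proof (nsq_ge0 X (fst l)); lra).
    destruct (Hc (sqrt (nsq X (fst l)))) as [N HN]; [apply sqrt_lt_R0; exact Hp|].
    pose proof (HN N (le_n N)) as E. unfold norm2, inner2 in E. simpl in E.
    destruct (Hu N) as [F _]. unfold sub in E. rewrite F, add0l in E.
    pose proof (nsq_opp X (fst l)) as E2. unfold nsq in E2. rewrite E2 in E.
    pose proof (inner_pos X (add X (snd (u N)) (opp X (snd l)))).
    assert (sqrt (Re (inner X (fst l) (fst l))) <= sqrt (Re (inner X (fst l) (fst l)) + Re (inner X (add X (snd (u N)) (opp X (snd l))) (add X (snd (u N)) (opp X (snd l)))))).
    { apply sqrt_le_1_alt. lra. }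
    unfold nsq in *. lra.
Qed.

Lemma span_lift (l : list X) (g : X) : in_span l g -> in_span2 (map (fun u => (zero X, u)) l) (zero X, g).
Proof.
  revert g; induction l as [|u l IH]; simpl; intros g Hg.
  - subst. reflexivity.
  - destruct Hg as [c [w [Hw ->]]]. exists c, (zero X, w). split; auto.
    unfold add2, scal2; simpl. rewrite scal_zero, add_zero. reflexivity.
Qed.

Lemma span2_snd (l : list (X * X)) (w : X * X) : in_span2 l w -> in_span (map snd l) (snd w).
Proof.
  revert w; induction l as [|u l IH]; simpl; intros w Hw.
  - subst. reflexivity.
  - destruct Hw as [c [w' [Hw' ->]]]. exists c, (snd w'). auto.
Qed.

Lemma decomp (A Z K : X * X -> Prop) (l : list X) : is_subspace2 A -> is_subspace2 Z ->
  (forall z, Z z -> exists g, op_part A (fst z, g) /\ in_span l g) ->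
  (forall z, Z z -> A (fst z, zero X) -> K z) ->
  exists t, forall z, Z z -> exists w, in_span2 t w /\ K (sub2 z w).
Proof.
  intros sA sZ Hex Hker.
  set (Phi := fun (z y : X * X) => exists g, op_part A (fst z, g) /\ y = (zero X, g)).
  destruct (fin_lemma PX Phi (map (fun u => (zero X, u)) l) Z) as [t Ht].
  - destruct sZ as [Z0 _]. exact Z0.
  - intros z1 z2 c H1 H2. exact (subsp_lin X Z sZ z1 z2 c H1 H2).
  - intros z1 z2 y1 y2 c [g1 [O1 ->]] [g2 [O2 ->]].
    exists (add X g1 (scal X c g2)). split.
    + exact (op_lin X A sA _ _ _ _ c O1 O2).
    + change (add2 (zero X, g1) (scal2 c (zero X, g2)) = (zero X, add X g1 (scal X c g2))).
      unfold add2, scal2; simpl. rewrite scal_zero, add_zero. reflexivity.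
  - intros z Hz. destruct (Hex z Hz) as [g [Og Sg]]. exists (zero X, g). split.
    + exists g; auto.
    + apply span2_eq. apply span_lift. exact Sg.
  - exists t. intros z Hz. destruct (Ht z Hz) as [w [Zw [Sw Pw]]].
    exists w. split; [apply span2_eq; exact Sw|].
    destruct Pw as [g [Og Eg]]. apply (f_equal snd) in Eg. simpl in Eg. subst g.
    apply Hker.
    + exact (subsp_sub X Z sZ z w Hz Zw).
    + exact (proj1 Og).
Qed.

End Main2.

Lemma I5 (H : HilbertSpace) (a b c e : H) :
  add H (add H a (opp H c)) (opp H (add H b (opp H e))) = add H (add H a (opp H b)) (opp H (add H c (opp H e))).
Proof. rewrite !opp_add, !opp_opp, add_ACA. reflexivity. Qed.

Lemma span_orth (H : HilbertSpace) (f : H -> H) (n : H) (L : list H) (v : H) :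
  (forall u, inner H (f u) n = C0) -> in_span (map f L) v -> inner H v n = C0.
Proof.
  intros Hf. revert v. induction L as [|u L IH]; simpl; intros v Hv.
  - subst. apply inner0l.
  - destruct Hv as [c [w [Hw ->]]]. rewrite inner_add_l, inner_scal_l, Hf, IH by auto. csolve.
Qed.

Section Main3.
Context (X : HilbertSpace).
Local Notation PX := (prodH X).

Lemma part1 (T S A : X * X -> Prop) (lam : C) :
  closed_subspace2 T -> closed_subspace2 S -> closed_subspace2 A ->
  hermitian S -> hermitian A ->
  (forall x, dom T x <-> dom S x) ->
  (forall x, dom T x -> dom A x) ->
  (forall p, T p <-> rel_sum S A p) ->
  in_resolvent S lam ->
  finite_rank_operator (restrict (op_part A) (dom T)) -> finite_rank_perturbation T S.
Proof.
  intros cT cS cA hS hA Hdom HdA Hsum rS [_ [l Hl]].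
  pose proof cT as [sT clT]. pose proof cS as [sS clS]. pose proof cA as [sA clA].
  assert (F1 : forall h, A (zero X, h) -> S (zero X, h)).
  { intros h Ah. apply (resolv_zero X S lam hS sS rS). intros y Dy.
    apply (herm_mult_orth X A hA h y Ah). apply HdA. apply Hdom. exact Dy. }
  destruct (proj2_exists X (multi_part A) (multi_closed X A cA)) as [Pm oPm].
  assert (ex_op : forall x g, A (x, g) -> exists g', op_part A (x, g')).
  { intros x g Axg. destruct (oPm (x, g)) as [[Fq Aq] Oq].
    exists (sub g (snd (Pm (x, g)))). split.
    - pose proof (subsp_sub X A sA _ _ Axg Aq) as E. unfold sub2 in E. simpl in E.
      rewrite Fq, sub_zero_r in E. exact E.
    - intros r Hr. pose proof (Oq r Hr) as E. unfold sub2 in E. simpl in E.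
      rewrite Fq, sub_zero_r in E. exact E. }
  set (N := fun p => S p /\ T p).
  assert (Hex : forall Z : X * X -> Prop, (forall z, Z z -> dom T (fst z)) ->
            forall z, Z z -> exists g, op_part A (fst z, g) /\ in_span l g).
  { intros Z HZ z Zz. pose proof (HZ z Zz) as Dz.
    destruct (HdA _ Dz) as [g Ag]. destruct (ex_op _ _ Ag) as [g' Og].
    exists g'. split; auto. apply (Hl (fst z, g')). split; auto. }
  destruct (decomp X A T N l sA sT) as [t Ht].
  { apply Hex. intros [x f] Tz. exists f. exact Tz. }
  { intros [x f'] Tz Az. simpl in Az. split; auto.
    destruct (proj1 (Hsum _) Tz) as [f [g [Sf [Ag Ef]]]]. simpl in Sf, Ag, Ef.
    pose proof (subsp_sub X A sA _ _ Ag Az) as E. unfold sub2 in E. simpl in E.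
    rewrite sub_self, sub_zero_r in E. apply F1 in E.
    destruct sS as [_ [Sa _]]. pose proof (Sa _ _ Sf E) as E2. unfold add2 in E2. simpl in E2.
    rewrite add_zero, <- Ef in E2. exact E2. }
  destruct (decomp X A S N l sA sS) as [s Hs].
  { apply Hex. intros [x f] Sz. apply Hdom. exists f. exact Sz. }
  { intros [x f] Sz Az. simpl in Az. split; auto. apply Hsum. exists f, (zero X).
    simpl. split; auto. split; auto. symmetry. apply add_zero. }
  assert (sN : is_subspace2 N).
  { destruct sT as [T0 [Ta Ts]]. destruct sS as [S0 [Sa Ss]].
    split; [split; auto|split]; intros; destruct H; try destruct H0; split; auto. }
  assert (cN : closed_subspace2 N).
  { split; auto. intros u l0 Hu Hc. split; [apply (clS u l0)|apply (clT u l0)]; auto; intro n; apply Hu. }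
  destruct (proj2_exists X T cT) as [PT oT].
  destruct (proj2_exists X S cS) as [PS oS].
  destruct (proj2_exists X N cN) as [PN oN].
  exists PT, PS. split; auto. split; auto.
  exists (map (fun u => sub2 u (PN u)) (t ++ s)). intro p.
  destruct (oT p) as [TP _]. destruct (oS p) as [SP _].
  destruct (Ht _ TP) as [w1 [Sw1 Nw1]]. destruct (Hs _ SP) as [w2 [Sw2 Nw2]].
  set (d := sub2 (PT p) (PS p)). set (w := sub2 w1 w2).
  assert (Sw : in_span (X:=PX) (t ++ s) w).
  { unfold w. rewrite p_sub_as. apply (span_add_scal PX).
    - apply span_app_l. apply span2_eq. exact Sw1.
    - apply span_app_r. apply span2_eq. exact Sw2. }
  assert (Ndw : N (sub2 d w)).
  { unfold d, w. change (N (sub (X:=PX) (sub (X:=PX) (PT p) (PS p)) (sub (X:=PX) w1 w2))). unfold sub. rewrite I5.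
    exact (subsp_sub X N sN _ _ Nw1 Nw2). }
  destruct (proj_span PX N PN sN (fun u => proj1 (oN u)) (t ++ s) w Sw) as [w' [Sw' Nww']].
  set (m := sub2 d w').
  assert (Nm : N m).
  { unfold m. change (N (sub (X:=PX) d w')). unfold sub. rewrite <- (I3 PX d w w').
    destruct sN as [_ [Na _]]. apply Na; assumption. }
  assert (Od : forall n, N n -> inner2 d n = C0).
  { intros n [Sn Tn]. unfold d. rewrite p_inner_sub_l, (proj_inner X T PT oT p n Tn), (proj_inner X S PS oS p n Sn).
    csolve. }
  assert (Ow' : forall n, N n -> inner2 w' n = C0).
  { intros n Nn. apply (span_orth PX (fun u => sub (X:=PX) u (PN u)) n (t ++ s) w'); auto.
    intro u. destruct (oN u) as [_ O]. apply O. exact Nn. }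
  assert (m0 : m = zero2).
  { apply p_inner_def. unfold m at 1. rewrite p_inner_sub_l, Od, Ow' by exact Nm. csolve. }
  assert (dw : d = w') by (apply p_sub_eq0; exact m0).
  apply span2_eq. fold d. rewrite dw. exact Sw'.
Qed.

End Main3.

Lemma I6 (H : HilbertSpace) (z1 s1 z2 s2 : H) (c : C) :
  add H (add H z1 (opp H s1)) (scal H c (add H z2 (opp H s2))) =
  add H (add H z1 (scal H c z2)) (opp H (add H s1 (scal H c s2))).
Proof.
  rewrite scal_distr_vec, scal_opp, opp_add, opp_scal, add_ACA. reflexivity.
Qed.

Lemma I7 (H : HilbertSpace) (a b c : H) :
  add H (add H a b) (opp H c) = add H b (opp H (add H c (opp H a))).
Proof.
  rewrite opp_add, opp_opp, (add_comm H a b), <- add_assoc, (add_comm H a). reflexivity.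
Qed.

Section Main4.
Context (X : HilbertSpace).
Local Notation PX := (prodH X).

Lemma part2 (T S A : X * X -> Prop) (lam : C) :
  closed_subspace2 T -> closed_subspace2 S -> closed_subspace2 A ->
  hermitian T -> hermitian S ->
  (forall x, dom T x <-> dom S x) ->
  (forall p, T p <-> rel_sum S A p) ->
  in_resolvent T lam ->
  finite_rank_perturbation T S ->
  reduces (orth_compl (img_at T (zero X))) A ->
  finite_rank_operator (restrict (op_part A) (dom T)).
Proof.
  intros cT cS cA hT hS Hdom Hsum rT [PT [PS [oT [oS [l Hl]]]]] [Mi [Mc [P [oP Pred]]]].
  pose proof cT as [sT clT]. pose proof cS as [sS clS]. pose proof cA as [sA clA].
  set (M := orth_compl (img_at T (zero X))) in *.
  assert (F2 : forall h, S (zero X, h) -> T (zero X, h)).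
  { intros h Sh. apply (resolv_zero X T lam hT sT rT). intros y Dy.
    apply (herm_mult_orth X S hS h y Sh). apply Hdom. exact Dy. }
  split.
  { intros x f1 f2 [[A1 O1] D1] [[A2 O2] D2].
    set (q := sub2 (x, f1) (x, f2)).
    assert (Mq : multi_part A q).
    { split. unfold q. simpl. apply sub_self. apply subsp_sub; auto. }
    assert (q0 : q = zero2).
    { apply p_inner_def. unfold q at 1. rewrite p_inner_sub_l, (O1 q Mq), (O2 q Mq). csolve. }
    apply p_sub_eq0 in q0. injection q0. auto. }
  destruct Mi as [M0 [Ma Ms]].
  assert (Msub : forall a b, M a -> M b -> M (sub a b)).
  { intros a b Ha Hb. unfold sub. rewrite oppE. apply Ma; auto. }
  assert (Pfix : forall y, M y -> P y = y).
  { intros y My. destruct (oP y) as [MP O]. symmetry. apply sub_eq0. apply inner_def. apply O.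
    apply Msub; auto. }
  assert (KillV : forall x' v', dom T x' -> op_part A (x', v') -> S (zero X, v') -> v' = zero X).
  { intros x' v' Dx' [Av' Ov'] Sv'.
    assert (Mx' : M x').
    { intros g Tg. unfold img_at in Tg. rewrite inner_conj, (herm_mult_orth X T hT g x' Tg Dx'). csolve. }
    pose proof (Pred _ _ Av') as AP. rewrite (Pfix x' Mx') in AP.
    set (q := sub2 (x', v') (x', P v')).
    assert (Mq : multi_part A q).
    { split. unfold q. simpl. apply sub_self. apply subsp_sub; auto. }
    pose proof (Ov' q Mq) as O1. unfold q, inner2, sub2 in O1. simpl in O1.
    rewrite sub_self, inner0r in O1.
    destruct (oP v') as [MPv O2']. pose proof (O2' (P v') MPv) as O2.
    assert (E : sub v' (P v') = zero X).
    { apply inner_def. unfold sub. rewrite inner_add_l, inner_opp_l, (inner_conj X (add X v' (opp X (P v'))) (P v')).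
      fold (sub v' (P v')). rewrite O2. unfold sub in O1.
      apply Ceq; [pose proof (f_equal Re O1) | pose proof (f_equal Im O1)]; simpl in *; unfold sub in *; lra. }
    apply sub_eq0 in E.
    assert (Mv' : M v') by (rewrite E; exact MPv).
    apply inner_def. apply Mv'. apply F2. exact Sv'. }
  set (Z2 := fun z : X * X => fst z = zero X /\ exists x, dom T x /\ op_part A (x, snd z)).
  set (Phi := fun z y : X * X => exists s, S s /\ y = sub2 z s /\ forall r, S r -> inner2 y r = C0).
  destruct (fin_lemma PX Phi l Z2) as [t Ht].
  - split; [reflexivity|]. exists (zero X). split.
    + exists (zero X). destruct sT as [T0 _]. exact T0.
    + split. destruct sA as [A0 _]. exact A0. intros q _. exact (inner0l PX q).
  - intros z1 z2 c [Fz1 [x1 [D1 O1]]] [Fz2 [x2 [D2 O2]]]. split.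
    + change (add X (fst z1) (scal X c (fst z2)) = zero X). rewrite Fz1, Fz2, scal_zero. apply add_zero.
    + exists (add X x1 (scal X c x2)). split.
      * destruct D1 as [f1 T1]. destruct D2 as [f2 T2]. exists (add X f1 (scal X c f2)).
        exact (subsp_lin X T sT (x1, f1) (x2, f2) c T1 T2).
      * exact (op_lin X A sA _ _ _ _ c O1 O2).
  - intros z1 z2 y1 y2 c [s1 [S1 [E1 O1]]] [s2 [S2 [E2 O2]]].
    exists (add2 s1 (scal2 c s2)). split; [exact (subsp_lin X S sS _ _ c S1 S2)|]. split.
    + subst y1 y2. exact (I6 PX z1 s1 z2 s2 c).
    + intros r Sr. change (inner2 (add2 y1 (scal2 c y2)) r = C0).
      rewrite p_inner_add_l, p_inner_scal_l, O1, O2 by auto. csolve.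
  - intros [z1 v] [Fz [x [Dx Ox]]]. simpl in Fz, Ox. subst z1.
    destruct (proj1 (Hdom x) Dx) as [f Sxf].
    set (p := (x, add X f v)).
    assert (Tp : T p) by (apply Hsum; exists f, v; simpl; split; auto; split; auto; exact (proj1 Ox)).
    pose proof (proj_fix X T PT sT oT p Tp) as Efix.
    exists (sub2 (PT p) (PS p)). split.
    + exists (sub2 (PS p) (x, f)). split; [exact (subsp_sub X S sS _ _ (proj1 (oS p)) Sxf)|]. split.
      * rewrite Efix.
        assert (Ep : p = add2 (x, f) (zero X, v)) by (unfold p, add2; simpl; rewrite add_zero; reflexivity).
        replace (sub2 p (PS p)) with (sub2 (add2 (x, f) (zero X, v)) (PS p)) by (rewrite <- Ep; reflexivity).
        exact (I7 PX (x, f) (zero X, v) (PS p)).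
      * rewrite Efix. exact (proj2 (oS p)).
    + apply span2_eq. apply Hl.
  - exists (map snd t). intros [x v] [[Ax Ox] Dx]. simpl in Dx. simpl.
    assert (Zz : Z2 (zero X, v)) by (split; [reflexivity|exists x; split; auto; split; auto]).
    destruct (Ht _ Zz) as [w [Zw [Sw Pw]]].
    set (z' := sub2 (zero X, v) w).
    assert (Zz' : Z2 z').
    { unfold z'. rewrite p_sub_as. destruct Zz as [F1 [x1 [D1 O1]]]. destruct Zw as [F2' [x2 [D2 O2]]].
      split.
      + simpl. simpl in F1. rewrite F2', scal_zero. apply add_zero.
      + exists (add X x1 (scal X (Copp C1) x2)). split.
        * destruct D1 as [f1 T1]. destruct D2 as [f2 T2]. exists (add X f1 (scal X (Copp C1) f2)).
          exact (subsp_lin X T sT (x1, f1) (x2, f2) _ T1 T2).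
        * exact (op_lin X A sA _ _ _ _ _ O1 O2). }
    destruct Pw as [s [Ss [Es _]]].
    assert (Esz : s = z').
    { symmetry. apply p_sub_eq0. symmetry. exact Es. }
    destruct Zz' as [Fz' [x' [Dx' Ox']]].
    assert (Sz : S (zero X, snd z')).
    { rewrite <- Fz'. rewrite Esz in Ss. destruct z'. exact Ss. }
    pose proof (KillV x' (snd z') Dx' Ox' Sz) as V0.
    assert (z'0 : z' = zero2).
    { destruct z' as [a b]. simpl in Fz', V0. subst. reflexivity. }
    apply p_sub_eq0 in z'0. replace v with (snd w) by (rewrite <- z'0; reflexivity).
    apply span2_snd. apply span2_eq. exact Sw.
Qed.

End Main4.

Theorem theorem3p6 (X : HilbertSpace) (T S A : X * X -> Prop) :
  closed_subspace2 T -> closed_subspace2 S -> closed_subspace2 A ->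
  hermitian T -> hermitian S -> hermitian A ->
  (forall x, dom T x <-> dom S x) ->
  (forall x, dom T x -> dom A x) ->
  (forall p, T p <-> rel_sum S A p) ->
  (exists lam, in_resolvent T lam /\ in_resolvent S lam) ->
  (finite_rank_operator (restrict (op_part A) (dom T)) ->
     finite_rank_perturbation T S) /\
  (finite_rank_perturbation T S ->
     reduces (orth_compl (img_at T (zero X))) S ->
     reduces (orth_compl (img_at T (zero X))) A ->
     finite_rank_operator (restrict (op_part A) (dom T))).
Proof.
  intros cT cS cA hT hS hA Hdom HdA Hsum [lam [rT rS]]. split.
  - apply (part1 X T S A lam); auto.
  - intros FRP _ RA. apply (part2 X T S A lam); auto.
Qed.
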